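(* The map $G$ is chaotic on $(\mathcal{X},d)$ in the sense of Devaney, i.e. $G$ is regular (its periodic points are dense in $\mathcal{X}$) and topologically transitive (for every pair of nonempty open sets $U,V\subset\mathcal{X}$ there exists $k>0$ with $G^k(U)\cap V\neq\emptyset$).
   Context: Fix an integer $\mathsf{N}\ge 1$ and write $\llbracket a;b\rrbracket=\{a,a+1,\dots,b\}$. Let $f:\mathbb{Z}/4\mathbb{Z}\to\mathbb{Z}/4\mathbb{Z}$, $f(x)=x+1 \pmod 4$, with $f^{-1}(x)=x-1\pmod 4$ and $f^0=\mathrm{id}$. Let $\mathrm{sign}(x)=1$ if $x>0$, $0$ if $x=0$, $-1$ if $x<0$. For $k\in\llbracket -\mathsf{N};\mathsf{N}\rrbracket$ define $f_k:(\mathbb{Z}/4\mathbb{Z})^{\mathsf{N}}\to(\mathbb{Z}/4\mathbb{Z})^{\mathsf{N}}$ by $f_k(C_1,\dots,C_{\mathsf{N}})=(C_1,\dots,C_{|k|-1},f^{\mathrm{sign}(k)}(C_{|k|}),\dots,f^{\mathrm{sign}(k)}(C_{\mathsf{N}}))$ (so $f_0$ is the identity). Folding sequences are $F=(F^j)_{j\in\mathbb{N}}\in\llbracket -\mathsf{N};\mathsf{N}\rrbracket^{\mathbb{N}}$; let $i(F)=F^0$ and let $\sigma$ be the shift, $\sigma((F^j)_{j})=(F^{j+1})_{j}$. A finite sequence $(k_1,\dots,k_n)$ is identified with $(k_1,\dots,k_n,0,0,\dots)$. On $\check{\mathcal{X}}=(\mathbb{Z}/4\mathbb{Z})^{\mathsf{N}}\times\llbracket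 -\mathsf{N};\mathsf{N}\rrbracket^{\mathbb{N}}$ define $G((C,F))=(f_{i(F)}(C),\sigma(F))$. SAW requirement: for $C\in(\mathbb{Z}/4\mathbb{Z})^{\mathsf{N}}$ let $p(C)=(X_0,\dots,X_{\mathsf{N}})\in(\mathbb{Z}^2)^{\mathsf{N}+1}$ with $X_0=(0,0)$ and $X_i=X_{i-1}+v(C_i)$, where $v(0)=(1,0)$, $v(1)=(0,-1)$, $v(2)=(-1,0)$, $v(3)=(0,1)$. $C$ satisfies the SAW requirement iff the points $X_0,\dots,X_{\mathsf{N}}$ are pairwise distinct. Let $\mathfrak{C}_{\mathsf{N}}$ be the set of $C\in(\mathbb{Z}/4\mathbb{Z})^{\mathsf{N}}$ for which there exist $n\ge1$ and $k_1,\dots,k_n\in\llbracket -\mathsf{N};\mathsf{N}\rrbracket$ such that $C$ is the first component of $G^n(((0,\dots,0),(k_1,\dots,k_n)))$ and, for every $i\le n$, the first component of $G^i(((0,\dots,0),(k_1,\dots,k_n)))$ satisfies the SAW requirement. Let $\mathcal{X}=\mathfrak{C}_{\mathsf{N}}\times\llbracket -\mathsf{N};\mathsf{N}\rrbracket^{\mathbb{N}}$ with metric $d((C,F),(\check C,\check F))=d_C(C,\check C)+d_F(F,\check F)$, where $d_C(C,\check C)=\sum_{k=1}^{\mathsf{N}}\delta(C_k,\check C_k)2^{\mathsf{N}-k}$ ($\delta(a,b)=0$ if $a=b$, $1$ otherwise) and $d_F(F,\check F)=\frac{9}{2\mathsf{N}}\sum_{k=0}^{\infty}\frac{|F^k-\check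 F^k|}{10^{k+1}}$. The paper regards $G$ as a self-map of $\mathcal{X}$. *)

(* Defs.v *)
From Stdlib Require Import ZArith List Reals.
From Coquelicot Require Import Coquelicot.
Import ListNotations.
Open Scope Z_scope.

(* A configuration C in (Z/4Z)^N is a list of integers (representatives in 0..3).
   A folding sequence F is a map nat -> Z (values in [-N;N]). *)
Definition config := list Z.
Definition foldseq := nat -> Z.
Definition point : Type := (config * foldseq)%type.

(* f^{sign k} applied to coordinates |k|,...,N (1-indexed); f_0 = id. *)
Definition fold_k (k : Z) (C : config) : config :=
  let fix go (i : nat) (l : list Z) : list Z :=
    match l with
    | [] => []
    | c :: l' =>
        (if (Z.abs k <=? Z.of_nat i)%Z then Z.modulo (c + Z.sgn k) 4 else c)
          :: go (S i) l'
    end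
  in go 1%nat C.

Definition shift (F : foldseq) : foldseq := fun j => F (S j).

Definition G (x : point) : point := (fold_k (snd x 0%nat) (fst x), shift (snd x)).

Definition Giter (n : nat) (x : point) : point := Nat.iter n G x.

(* finite sequence (k1,...,kn) identified with (k1,...,kn,0,0,...) *)
Definition seq_of_list (ks : list Z) : foldseq := fun j => nth j ks 0.

Definition vstep (c : Z) : Z * Z :=
  match Z.modulo c 4 with
  | 0 => (1, 0)
  | 1 => (0, -1)
  | 2 => (-1, 0)
  | _ => (0, 1)
  end.

Fixpoint path_from (X : Z * Z) (C : config) : list (Z * Z) :=
  match C with
  | [] => [X]
  | c :: C' => X :: path_from (fst X + fst (vstep c), snd X + snd (vstep c)) C'
  end.

Definition pos (C : config) : list (Z * Z) := path_from (0, 0) C.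

Definition SAW (C : config) : Prop := NoDup (pos C).

Definition in_range (N : nat) (k : Z) : Prop := - Z.of_nat N <= k <= Z.of_nat N.

Definition in_frakC (N : nat) (C : config) : Prop :=
  exists ks : list Z,
    (1 <= length ks)%nat /\ List.Forall (in_range N) ks /\
    C = fst (Giter (length ks) (repeat 0 N, seq_of_list ks)) /\
    (forall i : nat, (1 <= i <= length ks)%nat ->
       SAW (fst (Giter i (repeat 0 N, seq_of_list ks)))).

Definition InX (N : nat) (x : point) : Prop :=
  in_frakC N (fst x) /\ forall j : nat, in_range N (snd x j).

Open Scope R_scope.

Definition delta (a b : Z) : R := if Z.eqb a b then 0 else 1.

Definition d_C (N : nat) (C C' : config) : R :=
  fold_right Rplus 0
    (map (fun k : nat => delta (nth (k - 1) C 0%Z) (nth (k - 1) C' 0%Z) * 2 ^ (N - k))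
         (seq 1 N)).

Definition d_F (N : nat) (F F' : foldseq) : R :=
  9 / (2 * INR N) * Series (fun k => IZR (Z.abs (F k - F' k)) / 10 ^ (S k)).

Definition d (N : nat) (x y : point) : R := d_C N (fst x) (fst y) + d_F N (snd x) (snd y).

Definition openX (N : nat) (U : point -> Prop) : Prop :=
  (forall x, U x -> InX N x) /\
  (forall x, U x -> exists eps : R, 0 < eps /\
     forall y, InX N y -> d N x y < eps -> U y).

Definition nonempty (U : point -> Prop) : Prop := exists x, U x.

Definition periodic_point (x : point) : Prop :=
  exists n : nat, (1 <= n)%nat /\ Giter n x = x.

Definition regular (N : nat) : Prop :=
  forall U, openX N U -> nonempty U -> exists x, U x /\ periodic_point x.

Definition transitive (N : nat) : Prop :=
  forall U V, openX N U -> openX N V -> nonempty U -> nonempty V ->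
    exists (k : nat) (x : point), (1 <= k)%nat /\ U x /\ V (Giter k x).

Definition devaney_chaotic (N : nat) : Prop := regular N /\ transitive N.

(* Main.v *)
Require Import Defs.
From Stdlib Require Import ZArith List Reals.
From Coquelicot Require Import Coquelicot.
From Stdlib Require Import Lia Lra FunctionalExtensionality.
Import ListNotations.

Fixpoint gok (k : Z) (i : nat) (l : list Z) : list Z :=
  match l with
  | [] => []
  | c :: l' => (if (Z.abs k <=? Z.of_nat i)%Z then Z.modulo (c + Z.sgn k) 4 else c)
                 :: gok k (S i) l'
  end.

Lemma fold_k_eq k C : fold_k k C = gok k 1 C.
Proof.
  unfold fold_k. generalize 1%nat. induction C as [|c C IH]; intro n; simpl; auto.
  f_equal. apply IH.
Qed.

Definition valid (l : list Z) : Prop := List.Forall (fun c => (0 <= c < 4)%Z) l.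

Lemma gok_valid k i l : valid l -> valid (gok k i l).
Proof.
  revert i; induction l as [|c l IH]; intros i H; simpl; constructor.
  - inversion H; subst. destruct (Z.abs k <=? Z.of_nat i)%Z; auto.
    apply Z.mod_pos_bound; lia.
  - inversion H; subst. apply IH. exact H3.
Qed.

Lemma gok_inv k i l : valid l -> gok (- k) i (gok k i l) = l.
Proof.
  revert i; induction l as [|c l IH]; intros i H; simpl; auto.
  inversion H; subst. rewrite IH by auto. f_equal.
  rewrite Z.abs_opp. destruct (Z.abs k <=? Z.of_nat i)%Z; auto.
  rewrite Z.sgn_opp. rewrite Zplus_mod_idemp_l.
  replace (c + Z.sgn k + - Z.sgn k)%Z with c by lia.
  apply Z.mod_small; lia.
Qed.

Definition run (ks : list Z) (C : config) : config :=
  fold_left (fun C k => fold_k k C) ks C.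

Lemma run_app l1 l2 C : run (l1 ++ l2) C = run l2 (run l1 C).
Proof. unfold run. apply fold_left_app. Qed.

Lemma run_valid l C : valid C -> valid (run l C).
Proof.
  revert C; induction l as [|k l IH]; intros C H; simpl; auto.
  apply IH. rewrite fold_k_eq. apply gok_valid; auto.
Qed.

Lemma run_inv l C : valid C -> run (rev (map Z.opp l)) (run l C) = C.
Proof.
  revert C; induction l as [|k l IH]; intros C H; simpl; auto.
  rewrite run_app. rewrite IH.
  - simpl. rewrite !fold_k_eq. apply gok_inv; auto.
  - rewrite fold_k_eq. apply gok_valid; auto.
Qed.

Lemma Giter_eq n C F :
  Giter n (C, F) = (run (map F (seq 0 n)) C, fun j => F (n + j)%nat).
Proof.
  induction n.
  - simpl. f_equal.
  - change (Giter (S n) (C, F)) with (G (Giter n (C, F))).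
    rewrite IHn. unfold G; cbn [fst snd]. f_equal.
    + rewrite seq_S, map_app, run_app. rewrite Nat.add_0_r. reflexivity.
    + apply functional_extensionality; intro j. unfold Defs.shift. f_equal. lia.
Qed.

Lemma map_nth_seq (l : list Z) :
  map (fun j => nth j l 0%Z) (seq 0 (length l)) = l.
Proof.
  induction l as [|a l IH]; simpl; auto. f_equal.
  rewrite <- seq_shift, map_map. simpl. exact IH.
Qed.

Lemma map_seq_ext (f g : nat -> Z) n :
  (forall j, (j < n)%nat -> f j = g j) -> map f (seq 0 n) = map g (seq 0 n).
Proof.
  intro H. apply map_ext_in. intros j Hj. apply in_seq in Hj. apply H; lia.
Qed.

Lemma nth_map_seq (F : nat -> Z) m j : (j < m)%nat -> nth j (map F (seq 0 m)) 0%Z = F j.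
Proof.
  intro H. rewrite nth_indep with (d' := F 0%nat) by (rewrite length_map, length_seq; lia).
  rewrite map_nth, seq_nth by lia. reflexivity.
Qed.

Lemma Forall_nth' (P : Z -> Prop) l d j : List.Forall P l -> P d -> P (nth j l d).
Proof.
  intros H Hd. revert j; induction H; intros [|j]; simpl; auto.
Qed.

Lemma zeros_valid N : valid (repeat 0%Z N).
Proof.
  unfold valid. induction N; simpl; [apply Forall_nil | apply Forall_cons; [lia | exact IHN]].
Qed.

Lemma frakC_valid N C : in_frakC N C -> valid C.
Proof.
  intros [ks [_ [_ [HC _]]]]. rewrite HC, Giter_eq. simpl. apply run_valid. apply zeros_valid.
Qed.

Lemma frakC_run N C : in_frakC N C ->
  exists ks, (1 <= length ks)%nat /\ List.Forall (in_range N) ks /\ C = run ks (repeat 0%Z N).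
Proof.
  intros [ks [H1 [H2 [HC _]]]]. exists ks. repeat split; auto.
  rewrite HC, Giter_eq. simpl. unfold seq_of_list. rewrite map_nth_seq. reflexivity.
Qed.

Lemma d_C_refl N C : d_C N C C = 0%R.
Proof.
  unfold d_C. generalize (seq 1 N). intro l. induction l; simpl; auto.
  rewrite IHl. unfold delta. rewrite Z.eqb_refl. ring.
Qed.

Lemma term_bound N m (F F' : foldseq) k :
  (forall j, in_range N (F j)) -> (forall j, in_range N (F' j)) ->
  (forall j, (j < m)%nat -> F j = F' j) ->
  (0 <= IZR (Z.abs (F k - F' k)) / 10 ^ (S k) <= (2 * INR N * (/3) ^ m) * (/3) ^ k)%R.
Proof.
  intros HF HF' Hag.
  assert (P10 : (0 < 10 ^ S k)%R) by (apply pow_lt; lra).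
  assert (P3 : (0 < 3 ^ m * 3 ^ k)%R) by (apply Rmult_lt_0_compat; apply pow_lt; lra).
  split.
  - unfold Rdiv. apply Rmult_le_pos. apply IZR_le; lia. left; apply Rinv_0_lt_compat; auto.
  - destruct (Nat.lt_ge_cases k m) as [Hk|Hk].
    + rewrite Hag by auto. rewrite Z.sub_diag. simpl. unfold Rdiv. rewrite Rmult_0_l.
      apply Rmult_le_pos. apply Rmult_le_pos. apply Rmult_le_pos. lra. apply pos_INR.
      apply pow_le; lra. apply pow_le; lra.
    + assert (Habs : (Z.abs (F k - F' k) <= 2 * Z.of_nat N)%Z).
      { specialize (HF k); specialize (HF' k); unfold in_range in *; lia. }
      apply IZR_le in Habs. rewrite mult_IZR, <- INR_IZR_INZ in Habs.
      rewrite !pow_inv. unfold Rdiv.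
      rewrite Rmult_assoc, <- Rinv_mult.
      apply Rmult_le_compat; auto.
      * apply IZR_le; lia.
      * left; apply Rinv_0_lt_compat; auto.
      * apply Rinv_le_contravar; auto.
        apply Rle_trans with (3 ^ k * 3 ^ k)%R.
        { apply Rmult_le_compat_r. apply pow_le; lra. apply Rle_pow; [lra|exact Hk]. }
        rewrite <- Rpow_mult_distr. simpl.
        assert (H9 : (0 <= (3*3) ^ k <= 10 ^ k)%R).
        { split. apply pow_le; lra. apply pow_incr; lra. }
        assert (0 <= 10 ^ k)%R by (apply pow_le; lra). lra.
Qed.

Lemma d_close N (x y : point) m : (1 <= N)%nat ->
  fst x = fst y -> (forall j, in_range N (snd x j)) -> (forall j, in_range N (snd y j)) ->
  (forall j, (j < m)%nat -> snd x j = snd y j) ->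
  (d N x y <= 27 / 2 * (/3) ^ m)%R.
Proof.
  intros HN Hf Hx Hy Hag. unfold d. rewrite Hf, d_C_refl, Rplus_0_l. unfold d_F.
  set (c := (2 * INR N * (/3) ^ m)%R).
  assert (Hq : (Rabs (/3) < 1)%R) by (rewrite Rabs_pos_eq; lra).
  assert (HS : (Series (fun k => IZR (Z.abs (snd x k - snd y k)) / 10 ^ S k)
            <= Series (fun k => c * (/3) ^ k))%R).
  { apply Series_le.
    - intro k. apply term_bound; auto.
    - apply (ex_series_scal_l c (fun k => (/3) ^ k)%R). apply ex_series_geom; auto. }
  rewrite Series_scal_l, Series_geom in HS by auto.
  assert (HNr : (1 <= INR N)%R) by (apply (le_INR 1); auto).
  assert (Hp : (0 <= (/3) ^ m)%R) by (apply pow_le; lra).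
  replace (/ (1 - /3))%R with (3/2)%R in HS by field.
  unfold c in HS.
  apply Rle_trans with (9 / (2 * INR N) * (2 * INR N * (/ 3) ^ m * (3 / 2)))%R.
  - apply Rmult_le_compat_l; auto. left. apply Rdiv_lt_0_compat; lra.
  - right. field. lra.
Qed.

Lemma small_m eps : (0 < eps)%R -> exists m, (27 / 2 * (/3) ^ m < eps)%R.
Proof.
  intro He. assert (Hq : (Rabs (/3) < 1)%R) by (rewrite Rabs_pos_eq; lra).
  destruct (pow_lt_1_zero (/3) Hq (eps * 2 / 27)%R) as [m Hm]. lra.
  exists m. specialize (Hm m (le_n m)). rewrite Rabs_pos_eq in Hm by (apply pow_le; lra).
  lra.
Qed.

Lemma in_range_opp N k : in_range N k -> in_range N (- k).
Proof. unfold in_range; lia. Qed.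

Lemma Forall_range_opp_rev N l : List.Forall (in_range N) l -> List.Forall (in_range N) (rev (map Z.opp l)).
Proof.
  intro H. apply Forall_rev. apply Forall_map. eapply Forall_impl; [|exact H].
  apply in_range_opp.
Qed.

Lemma Forall_range_map N (F : foldseq) m : (forall j, in_range N (F j)) ->
  List.Forall (in_range N) (map F (seq 0 m)).
Proof. intro H. apply Forall_map. apply Forall_forall. auto. Qed.

Lemma in_range0 N : in_range N 0%Z.
Proof. unfold in_range; lia. Qed.

Theorem mainTheorem5 (N : nat) (HN : (1 <= N)%nat) : devaney_chaotic N.
Proof.
  split.
  -
    intros U [HUX HUo] [[C F] HU].
    destruct (HUX _ HU) as [HC HF]. simpl in HC, HF.
    destruct (HUo _ HU) as [eps [He Heps]].
    destruct (small_m eps He) as [m0 Hm0].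
    set (m := S m0).
    set (P := map F (seq 0 m)).
    set (B := P ++ rev (map Z.opp P)).
    assert (HlP : length P = m) by (unfold P; rewrite length_map, length_seq; auto).
    assert (HlB : length B = (2 * m)%nat)
      by (unfold B; rewrite length_app, length_rev, length_map; lia).
    set (n := length B).
    set (F' := fun j => nth (j mod n) B 0%Z).
    assert (Hn : n <> 0%nat) by (unfold n, m in *; lia).
    assert (HBr : List.Forall (in_range N) B).
    { unfold B. apply Forall_app; split. apply Forall_range_map; auto.
      apply Forall_range_opp_rev. apply Forall_range_map; auto. }
    exists (C, F'). split.
    + apply Heps.
      * split; simpl; auto. intro j. unfold F'. apply Forall_nth'; auto. apply in_range0.
      * eapply Rle_lt_trans; [|exact Hm0].
        apply Rle_trans with (27 / 2 * (/ 3) ^ m)%R.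
        { apply d_close; simpl; auto.
          - intro j. unfold F'. apply Forall_nth'; auto. apply in_range0.
          - intros j Hj. unfold F'. rewrite Nat.mod_small by lia.
            unfold B. rewrite app_nth1 by lia. unfold P. rewrite nth_map_seq; auto. }
        apply Rmult_le_compat_l. lra. unfold m. simpl.
        assert (0 <= (/3) ^ m0)%R by (apply pow_le; lra). lra.
    + exists n. split; [lia|].
      rewrite Giter_eq. f_equal.
      * rewrite (map_seq_ext F' (fun j => nth j B 0%Z)).
        { unfold n. rewrite map_nth_seq. unfold B. rewrite run_app. apply run_inv.
          eapply frakC_valid; eauto. }
        intros j Hj. unfold F'. rewrite Nat.mod_small; auto.
      * apply functional_extensionality; intro j. unfold F'.
        f_equal. rewrite <- (Nat.mul_1_l n) at 1. rewrite Nat.add_comm.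
        apply Nat.Div0.mod_add.
  -
    intros U V [HUX HUo] [HVX HVo] [[C1 F1] HU] [[C2 F2] HV].
    destruct (HUX _ HU) as [HC1 HF1]. destruct (HVX _ HV) as [HC2 HF2].
    simpl in HC1, HF1, HC2, HF2.
    destruct (HUo _ HU) as [eps [He Heps]].
    destruct (small_m eps He) as [m Hm].
    destruct (frakC_run _ _ HC1) as [ks1 [_ [Hr1 E1]]].
    destruct (frakC_run _ _ HC2) as [ks2 [Hl2 [Hr2 E2]]].
    set (P := map F1 (seq 0 m)).
    set (W := P ++ rev (map Z.opp P) ++ rev (map Z.opp ks1) ++ ks2).
    set (k := length W).
    set (F := fun j => if (j <? k)%nat then nth j W 0%Z else F2 (j - k)%nat).
    assert (HlP : length P = m) by (unfold P; rewrite length_map, length_seq; auto).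
    assert (HWr : List.Forall (in_range N) W).
    { unfold W. repeat (apply Forall_app; split).
      apply Forall_range_map; auto.
      apply Forall_range_opp_rev. apply Forall_range_map; auto.
      apply Forall_range_opp_rev; auto. auto. }
    assert (HFr : forall j, in_range N (F j)).
    { intro j. unfold F. destruct (j <? k)%nat; auto. apply Forall_nth'; auto. apply in_range0. }
    exists k, (C1, F). repeat split.
    + unfold k, W. rewrite !length_app. lia.
    + apply Heps.
      * split; simpl; auto.
      * eapply Rle_lt_trans; [|exact Hm]. apply d_close; simpl; auto.
        intros j Hj. unfold F. assert (j < k)%nat.
        { unfold k, W. rewrite length_app. lia. }
        destruct (Nat.ltb_spec j k); [|lia].
        unfold W. rewrite app_nth1 by lia. unfold P. rewrite nth_map_seq; auto.
    + rewrite Giter_eq.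
      replace (run (map F (seq 0 k)) C1) with C2.
      replace (fun j => F (k + j)%nat) with F2. exact HV.
      { apply functional_extensionality; intro j. unfold F.
        destruct (Nat.ltb_spec (k + j) k); [lia|]. f_equal; lia. }
      rewrite (map_seq_ext F (fun j => nth j W 0%Z)).
      { unfold k. rewrite map_nth_seq. unfold W. rewrite !run_app.
        rewrite run_inv by (eapply frakC_valid; eauto).
        rewrite E1, run_inv. auto.
        unfold valid. clear. induction N; simpl; [apply Forall_nil | apply Forall_cons; [lia | exact IHN]]. }
      intros j Hj. unfold F. destruct (Nat.ltb_spec j k); auto; lia.
Qed.
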